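(* Let $X$ and $Y$ be topological spaces. If $C(X)$ has the countable sup property and $Y$ has calibre $\aleph_1$, then $C(X\times Y)$ has the countable sup property.
   Context: $C(Z)$ is the vector lattice of real-valued continuous functions on $Z$ with the pointwise order; $X\times Y$ has the product topology. A vector lattice has the countable sup property if every nonempty subset possessing a supremum contains a countable subset with the same supremum. $Y$ has calibre $\aleph_1$ if every uncountable family of nonempty open subsets of $Y$ contains an uncountable subfamily with nonempty intersection. *)

(* Defs.v *)
From HB Require Import structures.
From mathcomp Require Import all_boot all_order all_algebra.
From mathcomp Require Import all_classical all_reals topology normedtype.
Set Implicit Arguments. Unset Strict Implicit. Unset Printing Implicit Defensive.
Import Order.TTheory GRing.Theory Num.Theory.
Import numFieldNormedType.Exports.
Local Open Scope classical_set_scope.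
Local Open Scope ring_scope.

Definition Cfun {R : realType} {Z : topologicalType} : set (Z -> R) :=
  [set f | continuous f].

Definition is_sup_C (R : realType) (Z : topologicalType)
    (A : set (Z -> R)) (s : Z -> R) : Prop :=
  Cfun s /\
  (forall f, A f -> forall z, f z <= s z) /\
  (forall u, Cfun u -> (forall f, A f -> forall z, f z <= u z) ->
     forall z, s z <= u z).

Definition countable_sup_property (R : realType) (Z : topologicalType) : Prop :=
  forall (A : set (Z -> R)) (s : Z -> R),
    A `<=` @Cfun R Z -> A !=set0 -> is_sup_C A s ->
    exists B : set (Z -> R), [/\ B `<=` A, countable B & is_sup_C B s].

Definition calibre_aleph1 (Y : topologicalType) : Prop :=
  forall F : set (set Y),
    ~ countable F -> (forall U, F U -> open U /\ U !=set0) ->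
    exists G : set (set Y),
      [/\ G `<=` F, ~ countable G & \bigcap_(U in G) U !=set0].

(* Main.v *)
Require Import Defs.
From HB Require Import structures.
From mathcomp Require Import all_boot all_order all_algebra.
From mathcomp Require Import all_classical all_reals topology normedtype.
From mathcomp Require Import lra.
Set Implicit Arguments. Unset Strict Implicit. Unset Printing Implicit Defensive.
Import Order.TTheory GRing.Theory Num.Theory.
Import numFieldNormedType.Exports.
Local Open Scope classical_set_scope.
Local Open Scope ring_scope.

Section C.
Context {R : realType} {Z : topologicalType}.
Implicit Types f g : Z -> R.

Lemma cB f g : continuous f -> continuous g -> continuous (fun z => f z - g z).
Proof. move=> cf cg z; exact: (@continuousB R R^o Z f g z (cf z) (cg z)). Qed.
Lemma cMax f g : continuous f -> continuous g -> continuous (fun z => Num.max (f z) (g z)).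
Proof. move=> cf cg z; exact: (@continuous_max R Z f g z (cf z) (cg z)). Qed.
Lemma cMin f g : continuous f -> continuous g -> continuous (fun z => Num.min (f z) (g z)).
Proof. move=> cf cg z; exact: (@continuous_min R Z f g z (cf z) (cg z)). Qed.
Lemma cC (c : R) : continuous (fun _ : Z => c).
Proof. by move=> z; apply: cst_continuous. Qed.
Lemma cD f g : continuous f -> continuous g -> continuous (fun z => f z + g z).
Proof. move=> cf cg z; exact: (@continuousD R R^o Z f g z (cf z) (cg z)). Qed.
Lemma cMn f (n : nat) : continuous f -> continuous (fun z => f z *+ n).
Proof. move=> cf; elim: n => [|n IH].
  have -> : (fun z => f z *+ 0) = (fun _ => 0) by apply: funext => z; rewrite mulr0n.
  exact: cC.
have -> : (fun z => f z *+ n.+1) = (fun z => f z *+ n + f z) by apply: funext => z; rewrite mulrSr.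
exact: cD.
Qed.
End C.

Lemma pairl_continuous (X Y : topologicalType) (y : Y) : continuous (fun x : X => (x, y)).
Proof.
move=> x W [[P Q] /= [Px Qy] PQW]; apply: filterS Px => x' Px'.
by apply: PQW; split => //; exact: nbhs_singleton.
Qed.

Lemma slice_cont (R : realType) (X Y : topologicalType) (e : X * Y -> R) (y : Y) :
  continuous e -> continuous (fun x => e (x, y)).
Proof.
move=> ce x; apply: (@continuous_comp _ _ _ (fun x => (x, y)) e).
  exact: pairl_continuous.
exact: ce.
Qed.

Lemma open_pos (R : realType) (Z : topologicalType) (e : Z -> R) :
  continuous e -> open [set z | 0 < e z].
Proof.
move=> ce; have := (proj1 (continuousP e) ce [set r : R | 0 < r]).
apply; exact: open_gt.
Qed.
Lemma archi_mul (R : realType) (x : R) : 0 < x -> exists n : nat, 1 <= x *+ n.+1.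
Proof.
move=> x0; set N := Num.bound x^-1; exists N.
have h : x^-1 < N%:R by apply: archi_boundP; rewrite invr_ge0 ltW.
have e1 : x * x^-1 = 1 by rewrite divff // lt0r_neq0.
have h2 : (N%:R : R) <= N.+1%:R by rewrite ler_nat.
rewrite -mulr_natr; nra.
Qed.

Definition ccc (R : realType) (Z : topologicalType) : Prop :=
  forall E : set (Z -> R),
   (forall e, E e -> [/\ continuous e, (forall z, 0 <= e z) & exists z, 0 < e z]) ->
   (forall e e', E e -> E e' -> e <> e' -> forall z, e z = 0 \/ e' z = 0) ->
   countable E.

Lemma min01 (R : realType) (x : R) : 0 <= x -> 0 <= Num.min x 1 <= 1.
Proof. by move=> x0; rewrite le_min x0 ler01 ge_min lexx orbT. Qed.

Lemma csp_ccc (R : realType) (Z : topologicalType) :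
  countable_sup_property R Z -> ccc R Z.
Proof.
move=> csp E HE Hdis; apply: contrapT => nE.
pose P := fun a : Z -> R => E a \/ [/\ continuous a, (forall z, 0 <= a z) &
   forall e, E e -> forall z, a z = 0 \/ e z = 0].
have Pc a : P a -> continuous a /\ forall z, 0 <= a z.
  by case=> [/HE[]|[]].
pose mk (a : Z -> R) (n : nat) := fun z => Num.min (a z *+ n.+1) 1.
pose A := [set b | exists a n, P a /\ b = mk a n].
have AC : A `<=` @Cfun R Z.
  move=> _ [a [n [/Pc[ca _] ->]]]; apply: cMin; [exact: cMn | exact: cC].
have A0 : A !=set0.
  exists (mk (fun _ => 0) 0); exists (fun _ => 0), 0; split => //.
  by right; split => //; [exact: cC | move=> e _ z; left].
have supA : is_sup_C A (fun _ => 1).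
  split; first exact: cC.
  split; first by move=> _ [a [n [_ ->]]] z; rewrite /mk ge_min lexx orbT.
  move=> u Cu ub.
  have key a z : P a -> 0 < a z -> 1 <= u z.
    move=> Pa az; have [n hn] := archi_mul az.
    have := ub (mk a n) (ex_intro _ a (ex_intro _ n (conj Pa erefl))) z.
    by rewrite /mk min_r.
  move=> z; case: (leP 1 (u z)) => // uz.
  pose d := fun z => Num.max (1 - u z) 0.
  have Pd : P d.
    right; split.
    - apply: cMax; [apply: cB; [exact: cC | exact: Cu] | exact: cC].
    - by move=> z'; rewrite le_max lexx orbT.
    - move=> e Ee z'; have [_ e0 _] := HE e Ee.
      case: (ltrgtP 0 (e z')) => [ez|ez|ez]; last by right.
      + left; have := key e z' (or_introl Ee) ez => h.
        by rewrite /d max_r // subr_le0.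
      + by move: (e0 z'); rewrite leNgt ez.
  have : 1 <= u z by apply: (key d z Pd); rewrite /d lt_max subr_gt0 uz.
  by rewrite leNgt uz.
have [B [BA cntB supB]] := csp A (fun _ => 1) AC A0 supA.
pose Q := fun b (e : Z -> R) => E e /\ exists n, b = mk e n.
pose g := fun b => match pselect (exists e, Q b e) with
  | left H => proj1_sig (cid H) | right _ => b end.
have gQ b e : Q b e -> g b = e.
  move=> Qbe; rewrite /g; case: pselect => [H|[]]; last by exists e.
  case: (cid H) => e' [Ee' [m bm]] /=.
  case: Qbe => Ee [n bn]; rewrite bm in bn.
  apply: contrapT => ne; have [_ _ [z ez]] := HE e Ee.
  have := congr1 (fun f => f z) bn; rewrite /mk.
  case: (Hdis e' e Ee' Ee ne z) => [-> | ez0]; last by move: ez; rewrite ez0 ltxx.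
  rewrite mul0rn => h.
  have : 0 < Num.min (e z *+ n.+1) 1 by rewrite lt_min ltr01 andbT pmulrn_lgt0.
  by rewrite -h min_l // ltxx.
pose EB := [set e | E e /\ exists n, B (mk e n)].
have cEB : countable EB.
  apply: (sub_countable (B := g @` B)); last first.
    exact: (card_le_trans (card_image_le g B) cntB).
  apply: subset_card_le => e [Ee [n Bn]]; exists (mk e n) => //.
  by apply: gQ; split => //; exists n.
have [e0 [Ee0 nEB]] : exists e, E e /\ ~ EB e.
  apply: contrapT => h; apply: nE; apply: (sub_countable _ cEB).
  apply: subset_card_le => e Ee; apply: contrapT => nEe; apply: h; by exists e.
have [ce0 e0ge _] := HE e0 Ee0.
pose u := fun z => 1 - Num.min (e0 z) 1.
have ubB : forall f, B f -> forall z, f z <= u z.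
  move=> b Bb z; have [a [n [Pa bE]]] := BA b Bb; rewrite bE.
  have dis : a z = 0 \/ e0 z = 0.
    case: Pa => [Ea|[_ _ h]]; last by case: (h e0 Ee0 z) => ->; [left|right].
    have [ae|ne] := pselect (a = e0); first by exfalso; apply: nEB; split => //; exists n; rewrite -ae -bE.
    exact: Hdis.
  have := min01 (e0ge z); rewrite /u /mk.
  case: dis => ->; rewrite ?mul0rn => /andP[h1 h2].
    by rewrite (min_l (@ler01 R)) subr_ge0.
  by rewrite (min_l (@ler01 R)) subr0 ge_min lexx orbT.
have cu : Cfun u by apply: cB; [exact: cC | apply: cMin; [exact: ce0 | exact: cC]].
have [_ [_ supB3]] := supB.
have [_ _ [z ez]] := HE e0 Ee0.
have := supB3 u cu ubB z; rewrite /u.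
have : 0 < Num.min (e0 z) 1 by rewrite lt_min ez ltr01.
lra.
Qed.

Lemma ccc_prod (R : realType) (X Y : topologicalType) :
  ccc R X -> calibre_aleph1 Y -> ccc R (X * Y)%type.
Proof.
move=> cX cal E HE Hdis; apply: contrapT => nE.
pose Qf (e : X * Y -> R) := snd @` [set p | 0 < e p].
have Qopen e : E e -> open (Qf e) /\ Qf e !=set0.
  move=> Ee; have [ce _ [p pp]] := HE e Ee; split.
    by apply: snd_open; exact: open_pos.
  by exists p.2; exists p.
have [E' [y0 [E'E nE' Hy0]]] : exists E' y0,
    [/\ E' `<=` E, ~ countable E' & forall e, E' e -> Qf e y0].
  pose F := Qf @` E.
  case: (pselect (countable F)) => cF.
  - apply: contrapT => hno; apply: nE.
    have : E `<=` \bigcup_(Q in F) [set e | E e /\ Qf e = Q].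
      by move=> e Ee; exists (Qf e) => //; exists e.
    move/subset_card_le/sub_countable; apply.
    apply: bigcup_countable => // Q [e Ee <-].
    apply: contrapT => ncnt; apply: hno.
    have [y Qy] := (Qopen e Ee).2.
    exists [set e' | E e' /\ Qf e' = Qf e], y; split => //.
      by move=> e' [].
    by move=> e' [_ ->].
  - have FU : forall U, F U -> open U /\ U !=set0 by move=> U [e Ee <-]; exact: Qopen.
    have [G [GF nG Gy]] := cal F cF FU.
    case: Gy => y0 Gy0.
    exists [set e | E e /\ G (Qf e)], y0; split.
    + by move=> e [].
    + move=> cE'; apply: nG.
      apply: (sub_countable _ (card_le_trans (card_image_le Qf _) cE')).
      apply: subset_card_le => Q GQ; have [e Ee eQ] := GF Q GQ.
      by exists e => //; split => //; rewrite eQ.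
    + by move=> e [_ Ge]; exact: Gy0.
pose sl (e : X * Y -> R) := fun x => e (x, y0).
have pos e : E' e -> exists x, 0 < e (x, y0).
  by move=> /Hy0 [[x y] /= pxy <-]; exists x.
have cS : countable (sl @` E').
  apply: cX.
  - move=> _ [e E'e <-]; have [ce e0 _] := HE e (E'E e E'e); split.
    + exact: slice_cont.
    + by move=> x; exact: e0.
    + exact: pos.
  - move=> _ _ [e E'e <-] [e' E'e' <-] ne x; apply: Hdis; try exact: E'E.
    by move=> eq; apply: ne; rewrite eq.
have inj : {in E' &, injective sl}.
  move=> e e' /set_mem E'e /set_mem E'e' eq; apply: contrapT => ne.
  have [x px] := pos e E'e.
  have := congr1 (fun f => f x) eq; rewrite /sl => exx.
  case: (Hdis e e' (E'E e E'e) (E'E e' E'e') ne (x, y0)) => h.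
    by move: px; rewrite h ltxx.
  by move: px; rewrite exx h ltxx.
by apply: nE'; rewrite -(eq_countable (inj_card_eq inj)).
Qed.

Lemma archi_eps (R : realType) (c : R) : 0 < c -> exists n : nat, n.+1%:R^-1 < c.
Proof.
move=> c0; have h0 : 0 < c / 2 by lra.
have [n hn] := archi_mul h0; exists n.
rewrite -(mulr_natr (c / 2)) in hn.
have x0 : 0 < (n.+1%:R : R) by rewrite ltr0Sn.
move: (n.+1%:R : R) x0 hn => x x0 hn.
have e1 : x^-1 * x = 1 by rewrite mulVf // lt0r_neq0.
have xi : 0 < x^-1 by rewrite invr_gt0.
have := ler_wpM2l (ltW xi) hn; rewrite /= mulr1 mulrCA e1 mulr1 => hx.
lra.
Qed.

Lemma ccc_csp (R : realType) (Z : topologicalType) :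
  ccc R Z -> countable_sup_property R Z.
Proof.
move=> cZ A s AC [f0 Af0] [Cs [ubA supA]].
pose eps (n : nat) : R := n.+1%:R^-1.
have eps0 n : 0 < eps n by rewrite invr_gt0 ltr0Sn.
pose prop n (d f : Z -> R) := A f /\ forall z, 0 < d z -> s z - f z <= eps n.
pose good n (d : Z -> R) := [/\ continuous d, (forall z, 0 <= d z),
   (exists z, 0 < d z) & exists f, prop n d f].
pose disj (D : set (Z -> R)) := forall e e', D e -> D e' -> e <> e' ->
   forall z, e z = 0 \/ e' z = 0.
pose Pn n (D : set (Z -> R)) := D `<=` good n /\ disj D.
have maxD n : exists D, Pn n D /\ forall D', D `<` D' -> ~ Pn n D'.
  apply: Zorn_bigcup => F FP tot; split.
    by move=> e [D FD De]; exact: (FP D FD).1.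
  move=> e e' [D1 FD1 D1e] [D2 FD2 D2e'].
  case: (tot D1 D2 FD1 FD2) => sub.
    by apply: (FP D2 FD2).2 => //; exact: sub.
  by apply: (FP D1 FD1).2 => //; exact: sub.
have [Dn HDn] := choice maxD.
pose pk n d := match pselect (exists f, prop n d f) with
  | left H => proj1_sig (cid H) | right _ => f0 end.
have pkP n d : good n d -> prop n d (pk n d).
  move=> [_ _ _ H]; rewrite /pk; case: pselect => [H'|//].
  exact: (proj2_sig (cid H')).
pose B := \bigcup_(n in [set: nat]) (pk n @` Dn n).
have BA : B `<=` A.
  move=> _ [n _ [d Dd <-]]; exact: (pkP n d ((HDn n).1.1 d Dd)).1.
exists B; split => //.
  apply: bigcup_countable => // n _.
  apply: (card_le_trans (card_image_le _ _)); apply: cZ; last exact: (HDn n).1.2.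
  by move=> e /((HDn n).1.1) [].
split => //; split; first by move=> f /BA; exact: ubA.
move=> u Cu ubB z0; apply: contrapT => /negP; rewrite -ltNge => uz0.
have [n hn] : exists n, eps n < s z0 - u z0 by apply: archi_eps; rewrite subr_gt0.
pose h := fun z => Num.max (s z - u z - eps n) 0.
have ch : continuous h.
  by apply: cMax; [apply: cB; [apply: cB; [exact: Cs | exact: Cu] | exact: cC] | exact: cC].
have hz0 : 0 < h z0 by rewrite /h lt_max subr_gt0 hn.
have [[d [Dd [z [hz dz]]]] | case2] :=
   pselect (exists d, Dn n d /\ exists z, 0 < h z /\ 0 < d z).
  have [Af pf] := pkP n d ((HDn n).1.1 d Dd).
  have Bf : B (pk n d) by exists n => //; exists d.
  have := ubB _ Bf z; have := pf z dz.
  move: hz; rewrite /h lt_max ltxx orbF; lra.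
have c2 : forall d, Dn n d -> forall z, 0 < h z -> d z = 0.
  move=> d Dd z hz; have [_ dge _ _] := (HDn n).1.1 d Dd.
  apply/eqP; rewrite eq_le dge andbT leNgt; apply/negP => dz.
  by apply: case2; exists d; split => //; exists z.
pose h' := fun z => Num.min (h z) (eps n).
have ch' : continuous h' by apply: cMin; [exact: ch | exact: cC].
have [f [Af [z1 hz1]]] : exists f, A f /\ exists z1, s z1 - f z1 < h' z1.
  apply: contrapT => nx.
  have ub' : forall f, A f -> forall z, f z <= s z - h' z.
    move=> f Af z; apply: contrapT => /negP; rewrite -ltNge => lt.
    by apply: nx; exists f; split => //; exists z; lra.
  have := supA (fun z => s z - h' z) (cB Cs ch') ub' z0.
  have : 0 < h' z0 by rewrite /h' lt_min hz0 eps0.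
  lra.
pose d' := fun z => Num.max (h' z - (s z - f z)) 0.
have fs : forall z, f z <= s z := ubA f Af.
have h'pos z : 0 < d' z -> 0 < h z.
  rewrite /d' lt_max ltxx orbF => hd; have := fs z.
  have : h' z <= h z by rewrite /h' ge_min lexx.
  lra.
have d'0 z : ~ 0 < d' z -> d' z = 0.
  move=> /negP; rewrite -leNgt => hd; apply/eqP; rewrite eq_le hd /=.
  by rewrite /d' le_max lexx orbT.
have gd' : good n d'.
  split.
  - apply: cMax; [apply: cB; [exact: ch' | apply: cB; [exact: Cs | exact: AC]] | exact: cC].
  - by move=> z; rewrite /d' le_max lexx orbT.
  - by exists z1; rewrite /d' lt_max subr_gt0 hz1.
  - exists f; split => // z; rewrite /d' lt_max ltxx orbF subr_gt0 => hd.
    have : h' z <= eps n by rewrite /h' ge_min lexx orbT.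
    lra.
have nD : ~ Dn n d'.
  move=> Dd'; have hd1 : 0 < d' z1 by rewrite /d' lt_max subr_gt0 hz1.
  have e0 := c2 d' Dd' z1 (h'pos z1 hd1).
  by move: hd1; rewrite e0 ltxx.
apply: ((HDn n).2 (Dn n `|` [set d'])).
  split; first by move=> x Dx; left.
  by move=> sub; apply: nD; exact: (sub d' (or_intror erefl)).
split.
  by move=> e [De| ->]; [exact: (HDn n).1.1 | exact: gd'].
move=> e e' [De| ->] [De'| ->] ne z.
- exact: (HDn n).1.2.
- case: (pselect (0 < d' z)) => hd; last by right; exact: d'0.
  by left; exact: (c2 e De z (h'pos z hd)).
- case: (pselect (0 < d' z)) => hd; last by left; exact: d'0.
  by right; exact: (c2 e' De' z (h'pos z hd)).
- by exfalso; exact: ne.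
Qed.

Theorem theorem6p2 (R : realType) (X Y : topologicalType) :
  countable_sup_property R X -> calibre_aleph1 Y ->
  countable_sup_property R (X * Y)%type.
Proof.
move=> cspX calY; apply: ccc_csp; apply: ccc_prod => //.
exact: csp_ccc.
Qed.
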